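(* Let $n\ge1$, $1\le q,q_1,q_2\le\infty$ and $s,s_1,s_2\in\mathbb{R}$. If $L(q_1,s_1)\ast L(q_2,s_2)\subset L(q,s)$, then $1+\frac1q\ge\frac1{q_1}+\frac1{q_2}$.
   Context: $\langle x\rangle=(1+|x|^2)^{1/2}$. For $1\le p\le\infty$, $s\in\mathbb{R}$, $L(p,s)$ is the space of measurable $f$ on $\mathbb{R}^n$ with $\|f\|_{L(p,s)}=\big(\int|f(x)|^p\langle x\rangle^{ps}dx\big)^{1/p}<\infty$ (ess sup of $|f(x)|\langle x\rangle^s$ if $p=\infty$). Convolution $(f\ast g)(x)=\int f(x-y)g(y)dy$. ''$X\ast Y\subset Z$'' means there is $C$ with $f\ast g\in Z$ and $\|f\ast g\|_Z\le C\|f\|_X\|g\|_Y$ for all $f\in X$, $g\in Y$. Convention $1/\infty=0$. *)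

(* Defs.v *)
From HB Require Import structures.
From mathcomp Require Import all_boot all_order all_algebra.
From mathcomp Require Import all_classical all_reals all_analysis.
Set Implicit Arguments. Unset Strict Implicit. Unset Printing Implicit Defensive.
Import Order.TTheory GRing.Theory Num.Theory.
Import numFieldNormedType.Exports.
Local Open Scope classical_set_scope.
Local Open Scope ring_scope.

(* R^n is represented by n.-tuple R, with its canonical product
   sigma-algebra (measure_tuple_display), i.e. the Borel sets of R^n. *)

Section weighted_Lp.
Variable R : realType.

(* Lebesgue integral over R^n of a nonnegative extended-real function,
   computed as the iterated one-dimensional Lebesgue integral (Tonelli). *)
Fixpoint iint (n : nat) : (n.-tuple R -> \bar R) -> \bar R :=
  match n return (n.-tuple R -> \bar R) -> \bar R with
  | 0 => fun f => f [tuple]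
  | m.+1 => fun f =>
      (\int[@lebesgue_measure R]_x iint (fun t => f (cons_tuple x t)))%E
  end.

Definition lebn (n : nat) (A : set (n.-tuple R)) : \bar R :=
  iint (fun x => (\1_A x)%:E).

Definition ae_n (n : nat) (P : n.-tuple R -> Prop) : Prop :=
  exists N : set (n.-tuple R), measurable N /\ lebn N = 0%E /\
    forall x, ~ N x -> P x.

Definition intn (n : nat) (h : n.-tuple R -> R) : R :=
  fine (iint (fun y => (Num.max (h y) 0)%:E) -
        iint (fun y => (Num.max (- h y) 0)%:E))%E.

Definition jbr (n : nat) (x : n.-tuple R) : R :=
  Num.sqrt (1 + \sum_(i < n) (tnth x i) ^+ 2).

Definition tsub (n : nat) (x y : n.-tuple R) : n.-tuple R :=
  [tuple tnth x i - tnth y i | i < n].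

Definition Lnorm_w (n : nat) (p : \bar R) (s : R) (f : n.-tuple R -> R)
  : \bar R :=
  match p with
  | r%:E => ((iint (fun x => (`|f x| `^ r * jbr x `^ (r * s))%:E)) `^ r^-1)%E
  | +oo%E => ereal_inf [set M%:E | M in
               [set M : R | 0 <= M /\ ae_n (fun x => `|f x| * jbr x `^ s <= M)]]
  | -oo%E => +oo%E
  end.

Definition inL (n : nat) (p : \bar R) (s : R) (f : n.-tuple R -> R) : Prop :=
  measurable_fun setT f /\ (Lnorm_w p s f < +oo)%E.

Definition conv_defined (n : nat) (f g : n.-tuple R -> R) : Prop :=
  ae_n (fun x => (iint (fun y => (`|f (tsub x y) * g y|)%:E) < +oo)%E).

Definition conv (n : nat) (f g : n.-tuple R -> R) : n.-tuple R -> R :=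
  fun x => intn (fun y => f (tsub x y) * g y).

Definition conv_incl (n : nat) (p1 : \bar R) (s1 : R) (p2 : \bar R) (s2 : R)
  (p : \bar R) (s : R) : Prop :=
  exists C : R, forall f g : n.-tuple R -> R,
    inL p1 s1 f -> inL p2 s2 g ->
    conv_defined f g /\ inL p s (conv f g) /\
    (Lnorm_w p s (conv f g) <= C%:E * Lnorm_w p1 s1 f * Lnorm_w p2 s2 g)%E.

Definition invex (p : \bar R) : R :=
  match p with r%:E => r^-1 | _ => 0 end.

End weighted_Lp.

(* Main.v *)
Require Import Defs.
From HB Require Import structures.
From mathcomp Require Import all_boot all_order all_algebra.
From mathcomp Require Import all_classical all_reals all_analysis.
From mathcomp Require Import measurable_realfun.
From mathcomp Require Import lra ring.
Import Order.TTheory GRing.Theory Num.Theory.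
Import numFieldNormedType.Exports.
Local Open Scope classical_set_scope.
Local Open Scope ring_scope.
Set Implicit Arguments. Unset Strict Implicit. Unset Printing Implicit Defensive.

Section S.
Variable R : realType.
Local Open Scope ereal_scope.

Lemma int_le (f g : R -> \bar R) : (forall x, 0 <= f x) -> (forall x, f x <= g x) ->
  \int[@lebesgue_measure R]_x f x <= \int[@lebesgue_measure R]_x g x.
Proof.
move=> f0 fg.
have g0 : forall x, 0 <= g x by move=> x; exact: le_trans (f0 x) (fg x).
rewrite !ge0_integralTE//; apply: le_ereal_sup => _ [h /= hf <-].
by exists h => //= x; exact: le_trans (hf x) (fg x).
Qed.

Lemma iint_ge0 n (f : n.-tuple R -> \bar R) : (forall x, 0 <= f x) -> 0 <= iint f.
Proof.
elim: n f => [|n IH] f f0 /=; first exact: f0.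
by apply: integral_ge0 => x _; apply: IH.
Qed.

Lemma iint_le n (f g : n.-tuple R -> \bar R) : (forall x, 0 <= f x) ->
  (forall x, f x <= g x) -> iint f <= iint g.
Proof.
elim: n f g => [|n IH] f g f0 fg /=; first exact: fg.
apply: int_le => x; first by apply: iint_ge0.
by apply: IH.
Qed.
Definition cubeb (a b : R) (x : seq R) : bool := all (fun y => (a <= y <= b)%R) x.

Lemma int_indic_itv (a b k : R) : (a < b)%R -> (0 <= k)%R ->
  \int[@lebesgue_measure R]_x ((if (a <= x <= b)%R then k else 0%R)%:E) = (k * (b - a))%:E.
Proof.
move=> ab k0.
have -> : (fun x => (if (a <= x <= b)%R then k else 0%R)%:E) =
   (fun x => k%:E * (\1_(`[a, b] : set R) x)%:E).
  apply/funext => x; rewrite indicE.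
  have -> : (x \in (`[a, b]%classic : set R)) = (a <= x <= b)%R.
    by rewrite mem_setE in_itv.
  by case: ifP => _ /=; [rewrite mule1|rewrite mule0].
rewrite ge0_integralZl_EFin //; try (by move=> x _; rewrite lee_fin);
  try (by apply/measurable_EFinP; apply: measurable_indic).
rewrite integral_indic// setIT.
have h := lebesgue_measure_itv `[a, b]; rewrite /= lte_fin ab -EFinB in h.
by rewrite [X in _ * X = _]h -EFinM.
Qed.

Lemma iint_cube n (a b c : R) : (a < b)%R -> (0 <= c)%R ->
  iint (fun x : n.-tuple R => (if cubeb a b x then c else 0%R)%:E) = (c * (b - a) ^+ n)%:E.
Proof.
elim: n c => [|n IH] c ab c0 /=; first by rewrite expr0 mulr1.
have -> : (fun x : R => iint (fun t : n.-tuple R =>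
     (if cubeb a b (cons_tuple x t) then c else 0%R)%:E)) =
   (fun x => (if (a <= x <= b)%R then (c * (b - a) ^+ n)%R else 0%R)%:E).
  apply/funext => x.
  have -> : (fun t : n.-tuple R => (if cubeb a b (cons_tuple x t) then c else 0%R)%:E)
     = (fun t : n.-tuple R => (if cubeb a b t then (if (a <= x <= b)%R then c else 0%R) else 0%R)%:E).
    by apply/funext => t /=; case: (a <= x <= b)%R; case: (cubeb a b t).
  rewrite IH//; last by case: ifP.
  by case: ifP => _ //; rewrite mul0r.
rewrite int_indic_itv//; last by rewrite mulr_ge0// exprn_ge0// subr_ge0 ltW.
by rewrite exprSr mulrA.
Qed.

Definition cubeS (n : nat) (a b : R) : set (n.-tuple R) := [set x | cubeb a b x].
Arguments cubeS : clear implicits.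

Lemma cubeS_meas n (a b : R) : measurable (cubeS n a b).
Proof.
have -> : cubeS n a b = \bigcap_(i in [set: 'I_n]) ((fun x => tnth x i) @^-1` `[a, b]%classic).
  apply/seteqP; split => x /=.
    move=> /all_tnthP h i _ /=; rewrite /= in_itv; exact: h i.
  by move=> h; apply/all_tnthP => i; have := h i I; rewrite /= in_itv.
apply: fin_bigcap_measurable; first exact: finite_finset.
move=> i _; rewrite -[X in measurable X]setTI.
by apply: measurable_tnth => //; exact: measurable_itv.
Qed.

Lemma indic_cube n (a b : R) (x : n.-tuple R) :
  (\1_(cubeS n a b) x : R) = (if cubeb a b x then 1 else 0)%R.
Proof.
rewrite indicE; have -> : (x \in cubeS n a b) = cubeb a b x by apply/idP/idP; rewrite inE.
by case: (cubeb a b x).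
Qed.

Lemma iint0 n : iint (fun _ : n.-tuple R => 0) = 0.
Proof.
rewrite (_ : (fun _ => 0) = (fun x : n.-tuple R => (if cubeb 0 1 x then 0%R else 0%R)%:E)); last by apply/funext => x; case: ifP.
by rewrite iint_cube ?ltr01 // mul0r.
Qed.

Lemma jbr_ge1 n (x : n.-tuple R) : (1 <= jbr x)%R.
Proof.
rewrite /jbr -{1}sqrtr1 ler_sqrt; last first.
  by rewrite addr_ge0 // sumr_ge0 // => i _; rewrite sqr_ge0.
by rewrite lerDl sumr_ge0 // => i _; rewrite sqr_ge0.
Qed.

Definition KK n : R := Num.sqrt (1 + n%:R).

Lemma jbr_le n (x : n.-tuple R) : cubeb 0 1 x -> (jbr x <= KK n)%R.
Proof.
move=> /all_tnthP h.
rewrite /jbr /KK ler_sqrt; last by rewrite addr_ge0.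
rewrite lerD2l (le_trans (ler_sum _ (G := fun _ => 1%R) _)) //.
  move=> i _; have /andP[h0 h1] := h i.
  by rewrite expr_le1.
by rewrite sumr_const card_ord.
Qed.

Lemma KK_ge1 n : (1 <= KK n)%R.
Proof. by rewrite /KK -{1}sqrtr1 ler_sqrt ?lerDl // addr_ge0. Qed.

Lemma w_bounds (w K t : R) : (1 <= w)%R -> (w <= K)%R ->
  (K `^ (- `|t|) <= w `^ t)%R /\ (w `^ t <= K `^ `|t|)%R.
Proof.
move=> w1 wK.
have w0 : (0 < w)%R by apply: lt_le_trans w1; exact: ltr01.
have K0 : (0 < K)%R by apply: lt_le_trans wK.
rewrite /powR !gt_eqF //.
have lw : (0 <= ln w)%R by apply: ln_ge0.
have lK : (ln w <= ln K)%R by rewrite ler_ln // posrE.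
have t1 : (t <= `|t|)%R by apply: ler_norm.
have t2 : (- `|t| <= t)%R by rewrite lerNl -normrN ler_norm.
have t0 : (0 <= `|t|)%R by [].
split; rewrite ler_expR; nra.
Qed.
Local Close Scope ereal_scope.

Lemma final_contra (c0 c1 e1 e2 : R) : (0 < c0)%R -> (0 <= c1)%R -> (e1 < e2)%R ->
  (forall a, (0 < a)%R -> (a <= 1)%R -> (c0 * a `^ e1 <= c1 * a `^ e2)%R) -> False.
Proof.
move=> c00 c10 e12 H.
pose d := (e2 - e1)%R.
have d0 : (0 < d)%R by rewrite subr_gt0.
pose t := (c0 / (c1 + 1))%R.
have t0 : (0 < t)%R by rewrite divr_gt0 // ltr_wpDl.
have tE : (t * (c1 + 1) = c0)%R.
  by rewrite /t -mulrA mulVf ?mulr1 // gt_eqF // ltr_wpDl.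
pose m := Num.min 1 (t / 2).
have m0 : (0 < m)%R by rewrite lt_min ltr01 divr_gt0.
have m1 : (m <= 1)%R by rewrite ge_min lexx.
have mt : (m <= t / 2)%R by rewrite ge_min lexx orbT.
pose a := (m `^ d^-1)%R.
have a0 : (0 < a)%R by apply: powR_gt0.
have a1 : (a <= 1)%R.
  rewrite /a -(powRr0 m); apply: ger_powR; first by rewrite m0 m1.
  by rewrite invr_ge0 ltW.
have ad : (a `^ d = m)%R by rewrite /a -powRrM mulVf ?gt_eqF // powRr1 // ltW.
have ae2 : (a `^ e2 = m * a `^ e1)%R.
  rewrite -ad -powRD; last by apply/implyP => _; rewrite gt_eqF.
  by rewrite /d subrK.
have := H a a0 a1; rewrite ae2 mulrA ler_pM2r; last by apply: powR_gt0.
move=> h.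
have h2 : (c1 * m <= c1 * (t / 2))%R by apply: ler_wpM2l.
nra.
Qed.
Local Open Scope ereal_scope.

Definition fa (n : nat) (a : R) : n.-tuple R -> R := \1_(cubeS n 0 a).
Arguments fa : clear implicits.

Lemma fa_meas n a : measurable_fun setT (fa n a).
Proof. by apply: measurable_indic; exact: cubeS_meas. Qed.

Lemma cube_sub (a b a' b' : R) (x : seq R) : (a' <= a)%R -> (b <= b')%R ->
  cubeb a b x -> cubeb a' b' x.
Proof.
move=> h1 h2; elim: x => //= y x IH /andP[/andP[y1 y2] hx].
by rewrite IH // andbT (le_trans h1 y1) (le_trans y2 h2).
Qed.

Lemma fa_bound n (r s a : R) : (1 <= r)%R -> (0 < a)%R -> (a <= 1)%R ->
  inL (r%:E) s (fa n a) /\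
  Lnorm_w (r%:E) s (fa n a) <= ((KK n `^ `|r * s| * a ^+ n) `^ r^-1)%:E.
Proof.
move=> r1 a0 a1.
have r0 : (0 < r)%R by apply: lt_le_trans r1; exact: ltr01.
have hpt : forall x : n.-tuple R,
    (`|fa n a x| `^ r * jbr x `^ (r * s))%:E <=
    (if cubeb 0 a x then KK n `^ `|r * s| else 0%R)%:E.
  move=> x; rewrite /fa indic_cube lee_fin.
  case: ifP => hx.
    rewrite normr1 powR1 mul1r.
    have := w_bounds (r * s) (jbr_ge1 x) (jbr_le (cube_sub (lexx 0) a1 hx)).
    by case.
  by rewrite normr0 powR0 ?gt_eqF // mul0r.
have hI : iint (fun x : n.-tuple R => (`|fa n a x| `^ r * jbr x `^ (r * s))%:E)
    <= (KK n `^ `|r * s| * a ^+ n)%:E.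
  apply: le_trans (iint_le _ hpt) _.
    by move=> x; rewrite lee_fin mulr_ge0 // powR_ge0.
  by rewrite iint_cube // ?powR_ge0 // subr0.
have hN : Lnorm_w (r%:E) s (fa n a) <= ((KK n `^ `|r * s| * a ^+ n) `^ r^-1)%:E.
  rewrite /Lnorm_w -poweR_EFin; apply: gt0_ler_poweR => //.
  - by rewrite invr_ge0 ltW.
  - rewrite in_itv /= leey andbT; apply: iint_ge0 => x.
    by rewrite lee_fin mulr_ge0 // powR_ge0.
  - rewrite in_itv /= leey andbT lee_fin mulr_ge0 // ?powR_ge0 //.
    by rewrite exprn_ge0 // ltW.
split => //; split; first exact: fa_meas.
by apply: le_lt_trans hN _; exact: ltry.
Qed.

Lemma fa01 (n : nat) (a : R) (x : n.-tuple R) : (0 <= fa n a x)%R /\ (fa n a x <= 1)%R.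
Proof. by rewrite /fa indic_cube; case: ifP => _; rewrite ?lexx ?ler01. Qed.

Lemma conv_lb n (a : R) (x : n.-tuple R) : (0 < a)%R -> cubeb (a / 2) a x ->
  ((a / 2) ^+ n <= Defs.conv (fa n a) (fa n a) x)%R.
Proof.
move=> a0 hx.
have a2 : (0 < a / 2 < a)%R by apply/andP; split; lra.
have a20 : (0 <= a / 2)%R by lra.
pose h := fun y : n.-tuple R => (fa n a (tsub x y) * fa n a y)%R.
have h0 : forall y, (0 <= h y)%R.
  by move=> y; have [? _] := @fa01 n a (tsub x y); have [? _] := @fa01 n a y;
    rewrite /h mulr_ge0.
rewrite /Defs.conv /intn -/h.
have -> : (fun y => (Num.max (- h y) 0)%:E) = (fun _ : n.-tuple R => 0).
  by apply/funext => y; rewrite max_r // oppr_le0.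
have -> : (fun y => (Num.max (h y) 0)%:E) = (fun y => (h y)%:E).
  by apply/funext => y; rewrite max_l.
rewrite iint0 sube0.
have hlo : forall y : n.-tuple R,
    (if cubeb 0 (a / 2) y then 1%R else 0%R)%:E <= (h y)%:E.
  move=> y; rewrite lee_fin; case: ifP => hy //.
  have hy' : cubeb 0 a y by apply: cube_sub hy => //; case/andP: a2 => _ /ltW.
  have hxy : cubeb 0 a (tsub x y).
    apply/all_tnthP => i; rewrite tnth_mktuple.
    have /andP[u1 u2] := (all_tnthP hx) i.
    have /andP[v1 v2] := (all_tnthP hy) i.
    by apply/andP; split; lra.
  by rewrite /h /fa !indic_cube hxy hy' mulr1.
have hup : forall y : n.-tuple R,
    (h y)%:E <= (if cubeb 0 a y then 1%R else 0%R)%:E.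
  move=> y; rewrite lee_fin /h; have [u1 u2] := @fa01 n a (tsub x y).
  rewrite {2}/fa indic_cube; case: ifP => _; last by rewrite mulr0.
  by rewrite mulr1.
set v := iint (fun y => (h y)%:E).
have L : ((a / 2) ^+ n)%:E <= v.
  apply: le_trans (iint_le _ hlo); last by move=> y; case: ifP.
  by rewrite iint_cube // ?mul1r ?subr0 //; case/andP: a2.
have U : v <= (a ^+ n)%:E.
  apply: le_trans (iint_le _ hup) _; first by move=> y; rewrite lee_fin.
  by rewrite iint_cube // mul1r subr0.
have vf : v \is a fin_num.
  rewrite ge0_fin_numE; last by apply: le_trans L; rewrite lee_fin exprn_ge0.
  by apply: le_lt_trans U _; exact: ltry.
by rewrite -lee_fin fineK.
Qed.

Lemma conv_norm_fin n (r s a : R) : (1 <= r)%R -> (0 < a)%R -> (a <= 1)%R ->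
  ((((a / 2) ^+ n) `^ r * KK n `^ (- `|r * s|) * (a - a / 2) ^+ n) `^ r^-1)%:E
    <= Lnorm_w (r%:E) s (Defs.conv (fa n a) (fa n a)).
Proof.
move=> r1 a0 a1.
have r0 : (0 < r)%R by apply: lt_le_trans r1; exact: ltr01.
have a2 : (a / 2 < a)%R by lra.
have hpt : forall x : n.-tuple R,
    (if cubeb (a / 2) a x then ((a / 2) ^+ n) `^ r * KK n `^ (- `|r * s|) else 0%R)%:E
    <= (`|Defs.conv (fa n a) (fa n a) x| `^ r * jbr x `^ (r * s))%:E.
  move=> x; rewrite lee_fin; case: ifP => hx; last by rewrite mulr_ge0 // powR_ge0.
  have hc := conv_lb a0 hx.
  apply: ler_pM; rewrite ?powR_ge0 //.
    apply: ge0_ler_powR; rewrite ?nnegrE; first exact: ltW.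
    - by rewrite exprn_ge0 //; lra.
    - by [].
    - by apply: le_trans hc _; exact: ler_norm.
  have hx' : cubeb 0 1 x by apply: cube_sub hx => //; lra.
  by have [] := w_bounds (r * s) (jbr_ge1 x) (jbr_le hx').
rewrite /Lnorm_w -poweR_EFin; apply: gt0_ler_poweR => //.
- by rewrite invr_ge0 ltW.
- rewrite in_itv /= leey andbT lee_fin; apply: mulr_ge0.
    by rewrite mulr_ge0 ?powR_ge0.
  by rewrite exprn_ge0 //; lra.
- rewrite in_itv /= leey andbT; apply: iint_ge0 => x.
  by rewrite lee_fin mulr_ge0 // powR_ge0.
- rewrite -iint_cube //; last by rewrite mulr_ge0 // powR_ge0.
  apply: iint_le hpt => x; case: ifP => _ //.
  by rewrite lee_fin mulr_ge0 // powR_ge0.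
Qed.

Lemma conv_norm_inf n (s a : R) : (0 < a)%R -> (a <= 1)%R ->
  ((a / 2) ^+ n * KK n `^ (- `|s|))%:E
    <= Lnorm_w +oo s (Defs.conv (fa n a) (fa n a)).
Proof.
move=> a0 a1.
have a2 : (a / 2 < a)%R by lra.
rewrite /Lnorm_w; apply/ereal_infP => _ [M [M0 [N [mN [N0 HN]]]] <-].
rewrite lee_fin.
have [x [hx nx]] : exists x : n.-tuple R, cubeb (a / 2) a x /\ ~ N x.
  apply: contrapT => hne.
  have sub : forall x : n.-tuple R, cubeb (a / 2) a x -> N x.
    by move=> x hx; apply: contrapT => nx; apply: hne; exists x.
  have : lebn (cubeS n (a / 2) a) <= lebn N.
    apply: iint_le => x; first by rewrite lee_fin.
    rewrite indic_cube lee_fin; case: ifP => // hx.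
    by rewrite indicE mem_set //; apply: sub.
  rewrite N0 /lebn => h.
  have h2 : iint (fun x : n.-tuple R => (if cubeb (a / 2) a x then 1%R else 0%R)%:E) <= 0.
    apply: le_trans h; apply: iint_le => x; first by case: ifP.
    by rewrite indic_cube.
  move: h2.
  rewrite iint_cube // mul1r lee_fin leNgt => /negP; apply.
  by rewrite exprn_gt0 // subr_gt0.
apply: le_trans (HN x nx).
apply: ler_pM; rewrite ?powR_ge0 ?exprn_ge0 //; first lra.
  by apply: le_trans (conv_lb a0 hx) _; exact: ler_norm.
have hx' : cubeb 0 1 x by apply: cube_sub hx => //; lra.
by have [] := w_bounds s (jbr_ge1 x) (jbr_le hx').
Qed.

Lemma ereal_prod_bound (C : R) (n1e n2e : \bar R) (B1 B2 : R) :
  0 <= n1e -> n1e <= B1%:E -> 0 <= n2e -> n2e <= B2%:E ->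
  C%:E * n1e * n2e <= (`|C| * B1 * B2)%:E.
Proof.
move=> h1 h1' h2 h2'.
have f1 : n1e \is a fin_num by rewrite ge0_fin_numE //; apply: le_lt_trans h1' _; exact: ltry.
have f2 : n2e \is a fin_num by rewrite ge0_fin_numE //; apply: le_lt_trans h2' _; exact: ltry.
have h1r : (0 <= fine n1e)%R by apply: fine_ge0.
have h2r : (0 <= fine n2e)%R by apply: fine_ge0.
have h1r' : (fine n1e <= B1)%R by rewrite -lee_fin fineK.
have h2r' : (fine n2e <= B2)%R by rewrite -lee_fin fineK.
rewrite -(fineK f1) -(fineK f2) -!EFinM lee_fin.
move: h1r h2r h1r' h2r'; set u := fine n1e; set v := fine n2e => g1 g2 g1' g2'.
have c1 : (C <= `|C|)%R by exact: ler_norm.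
have c2 : (0 <= `|C|)%R by [].
have uv : (0 <= u * v)%R by apply: mulr_ge0.
have uvB : (u * v <= B1 * B2)%R by apply: ler_pM.
rewrite -!mulrA.
apply: (@le_trans _ _ (`|C| * (u * v))%R).
  by apply: ler_wpM2r.
by apply: ler_wpM2l.
Qed.

Local Close Scope ereal_scope.

Lemma B_eq (K r a : R) (n : nat) : 0 <= K -> 0 < a ->
  (K * a ^+ n) `^ r = K `^ r * a `^ (n%:R * r).
Proof.
move=> K0 a0; rewrite powRM // ?exprn_ge0 ?ltW //.
by rewrite -powR_mulrn ?ltW // -powRrM.
Qed.

Lemma L_eq (K r b : R) (n : nat) : 0 < r -> 0 <= K -> 0 < b ->
  ((b ^+ n) `^ r * K * b ^+ n) `^ r^-1 = K `^ r^-1 * b `^ (n%:R * (1 + r^-1)).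
Proof.
move=> r0 K0 b0.
have bn : 0 <= b ^+ n by rewrite exprn_ge0 // ltW.
rewrite powRM ?mulr_ge0 ?powR_ge0 // powRM ?powR_ge0 //.
rewrite -powRrM mulfV ?gt_eqF // powRr1 //.
rewrite -powR_mulrn ?ltW // -powRrM.
rewrite mulrDr mulr1 powRD; last by apply/implyP => _; rewrite gt_eqF.
by rewrite mulrAC mulrC.
Qed.

Local Open Scope ereal_scope.
End S.
Arguments fa {R} n a.

Theorem proposition4p2 (R : realType) (n : nat) (hn : (1 <= n)%N)
    (q q1 q2 : \bar R) (s s1 s2 : R)
    (hq : (1%:E <= q)%E) (hq1 : (1%:E <= q1)%E) (hq2 : (1%:E <= q2)%E) :
  conv_incl n q1 s1 q2 s2 q s ->
  invex q1 + invex q2 <= 1 + invex q.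
Proof.
move=> [C HC].
have ib : forall p : \bar R, (1%:E <= p)%E -> (0 <= invex p) && (invex p <= 1).
  case=> [r| |] h /=.
  - rewrite lee_fin in h; have r0 : 0 < r by apply: lt_le_trans h; exact: ltr01.
    by rewrite invr_ge0 ltW // invf_le1.
  - by rewrite lexx ler01.
  - by rewrite leeNy_eq in h.
have /andP[iq0 iq1] := ib q hq.
have /andP[i10 i11] := ib _ hq1.
have /andP[i20 i21] := ib _ hq2.
move: HC i10 i11; case: q1 hq1 => [r1| |] hq1 HC i10 i11; last 2 first.
- by rewrite [invex +oo%E]/= add0r; lra.
- by rewrite leeNy_eq in hq1.
move: HC i20 i21; case: q2 hq2 => [r2| |] hq2 HC i20 i21; last 2 first.
- by rewrite [invex +oo%E]/= addr0; lra.
- by rewrite leeNy_eq in hq2.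
rewrite lee_fin in hq1; rewrite lee_fin in hq2.
rewrite leNgt; apply/negP => hlt.
have n0 : (0 < n%:R :> R) by rewrite ltr0n.
have KK0 : 0 < KK R n by apply: lt_le_trans ltr01 (@KK_ge1 R n).
have key : forall (e1 c0 : R), 0 < c0 -> e1 < n%:R * (r1^-1 + r2^-1) ->
  (forall a, 0 < a -> a <= 1 ->
     ((c0 * a `^ e1)%:E <= Lnorm_w q s (Defs.conv (fa n a) (fa n a)))%E) -> False.
  move=> e1 c0 c00 he H.
  pose k1 := (@KK R n `^ `|r1 * s1|) `^ r1^-1.
  pose k2 := (@KK R n `^ `|r2 * s2|) `^ r2^-1.
  apply: (@final_contra R c0 (`|C| * k1 * k2) e1 (n%:R * (r1^-1 + r2^-1))) => //.
    by rewrite !mulr_ge0 ?powR_ge0.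
  move=> a a0 a1.
  have [i1 b1] := @fa_bound R n r1 s1 a hq1 a0 a1.
  have [i2 b2] := @fa_bound R n r2 s2 a hq2 a0 a1.
  have [_ [_ hle]] := HC _ _ i1 i2.
  have := le_trans (H a a0 a1) (le_trans hle (ereal_prod_bound C (poweR_ge0 _ _) b1 (poweR_ge0 _ _) b2)).
  rewrite lee_fin !B_eq ?powR_ge0 //.
  rewrite mulrDr powRD; last by apply/implyP => _; rewrite gt_eqF.
  move=> h; apply: le_trans h _.
  by rewrite le_eqVlt; apply/orP; left; apply/eqP; rewrite /k1 /k2; ring.
case: q hq hlt iq0 iq1 HC key => [r| |] hq hlt iq0 iq1 HC key.
- rewrite lee_fin in hq.
  have r0 : 0 < r by apply: lt_le_trans hq; exact: ltr01.
  pose e1 := n%:R * (1 + r^-1).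
  pose k := (@KK R n `^ (- `|r * s|)) `^ r^-1.
  apply: (key e1 (k * (2^-1) `^ e1)).
  + by rewrite mulr_gt0 // ?powR_gt0 // ?invr_gt0.
  + by rewrite /e1 ltr_pM2l.
  + move=> a a0 a1; apply: le_trans (conv_norm_fin n s hq a0 a1).
    rewrite lee_fin (_ : a - a / 2 = a / 2); last by field.
    rewrite L_eq ?powR_ge0 ?divr_gt0 //.
    rewrite (powRM _ (ltW a0)); last by rewrite invr_ge0.
    by rewrite le_eqVlt; apply/orP; left; apply/eqP; rewrite /k /e1; ring.
- pose k := @KK R n `^ (- `|s|).
  apply: (key (n%:R) (k * (2^-1) `^ n%:R)).
  + by rewrite mulr_gt0 // ?powR_gt0 // ?invr_gt0.
  + by rewrite -{1}(mulr1 n%:R) ltr_pM2l //; rewrite /= addr0 in hlt.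
  + move=> a a0 a1; apply: le_trans (conv_norm_inf n s a0 a1).
    rewrite lee_fin -powR_mulrn; last by rewrite divr_ge0 // ltW.
    rewrite (powRM _ (ltW a0)); last by rewrite invr_ge0.
    by rewrite le_eqVlt; apply/orP; left; apply/eqP; rewrite /k; ring.
- by rewrite leeNy_eq in hq.
Qed.
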